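(* Let $\alpha_1,\beta_1,\alpha_2,\beta_2\in(0,1)$ with $\lambda_i:=1-\alpha_i-\beta_i\le 0$ for $i=1,2$. Let $w_1,w_2\ge 0$, $\Gamma_1,\Gamma_2\in(0,1]$, and MPR success probabilities $p_{1/1},p_{2/2},p_{1/1,2},p_{2/2,1}\in[0,1]$. For policies $\mathbf a_k=(a_{k,0},a_{k,1},a_{k,2})$, $k=1,2$, define $$E(\mathbf a_1,\mathbf a_2)=w_1E_1\big(q_1(\mathbf a_1,\mathbf a_2)\big)+w_2E_2\big(q_2(\mathbf a_1,\mathbf a_2)\big).$$ Then the minimum of $E$ over $\mathcal F_\Gamma=\mathcal P_1(\Gamma_1)\times\mathcal P_2(\Gamma_2)$ exists and at least one global minimizer is a pair of vertices, i.e. $$\min_{(\mathbf a_1,\mathbf a_2)\in\mathcal F_\Gamma}E(\mathbf a_1,\mathbf a_2)=\min_{\mathbf v_1\in\mathcal V_1,\ \mathbf v_2\in\mathcal V_2}E(\mathbf v_1,\mathbf v_2),$$ where $\mathcal V_k=\{(1,0,0),\,(1-\Gamma_k,\Gamma_k,0),\,(1-\Gamma_k,0,\Gamma_k)\}$. In particular, a global optimum is found among nine candidate policy pairs.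
   Context: For $i\in\{1,2\}$ and $q\in[0,1]$, the (steady-state reconstruction error) function is $$E_i(q)=\frac{2\alpha_i\beta_i(1-q)}{(\alpha_i+\beta_i)\big[(\alpha_i+\beta_i)-q(\alpha_i+\beta_i-1)\big]}=\frac{2\alpha_i\beta_i(1-q)}{(1-\lambda_i)(1-\lambda_i(1-q))}.$$ The effective update probabilities are, for $i\in\{1,2\}$ and $j$ the other index ($j=1+(i\bmod 2)$), $$q_i(\mathbf a_1,\mathbf a_2)=a_{1,i}a_{2,0}\,p_{1/1}+a_{1,0}a_{2,i}\,p_{2/2}+a_{1,i}a_{2,i}\big[1-(1-p_{1/1,2})(1-p_{2/2,1})\big]+a_{1,i}a_{2,j}\,p_{1/1,2}+a_{1,j}a_{2,i}\,p_{2/2,1}.$$ The feasible policy set of sensor $k$ is $\mathcal P_k(\Gamma_k)=\{\mathbf a_k\in\mathbb R_{\ge0}^3:\ a_{k,0}+a_{k,1}+a_{k,2}=1,\ a_{k,1}+a_{k,2}\le\Gamma_k\}$ (here $a_{k,0}$ is the probability of staying silent and $a_{k,i}$ the probability of sampling and transmitting source $i$ in a slot). *)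

(* Defs.v *)
From HB Require Import structures.
From mathcomp Require Import all_boot all_order all_algebra.
From mathcomp Require Import reals.
Set Implicit Arguments. Unset Strict Implicit. Unset Printing Implicit Defensive.
Import Order.TTheory GRing.Theory Num.Theory.
Local Open Scope ring_scope.

Section Defs.
Variable R : realType.

(* A (randomized) policy of a sensor: a0 = stay silent, a1 / a2 = sample and
   transmit source 1 / source 2. *)
Record policy := Pol { pa0 : R; pa1 : R; pa2 : R }.

Definition acomp (a : policy) (i : nat) : R :=
  match i with 0 => pa0 a | 1 => pa1 a | _ => pa2 a end.

Definition Err (al be q : R) : R :=
  2 * al * be * (1 - q) / ((al + be) * ((al + be) - q * (al + be - 1))).

Definition qeff (p11 p22 p112 p221 : R) (i : nat) (a1 a2 : policy) : R :=
  let j := (3 - i)%N in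
  acomp a1 i * acomp a2 0 * p11
  + acomp a1 0 * acomp a2 i * p22
  + acomp a1 i * acomp a2 i * (1 - (1 - p112) * (1 - p221))
  + acomp a1 i * acomp a2 j * p112
  + acomp a1 j * acomp a2 i * p221.

Definition feasible (G : R) (a : policy) : Prop :=
  0 <= pa0 a /\ 0 <= pa1 a /\ 0 <= pa2 a /\
  pa0 a + pa1 a + pa2 a = 1 /\ pa1 a + pa2 a <= G.

Definition vertex (G : R) (v : policy) : Prop :=
  v = Pol 1 0 0 \/ v = Pol (1 - G) G 0 \/ v = Pol (1 - G) 0 G.

Definition Eobj (al1 be1 al2 be2 w1 w2 p11 p22 p112 p221 : R)
  (a1 a2 : policy) : R :=
  w1 * Err al1 be1 (qeff p11 p22 p112 p221 1 a1 a2)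
  + w2 * Err al2 be2 (qeff p11 p22 p112 p221 2 a1 a2).

End Defs.

(* Main.v *)
Require Import Defs.
From HB Require Import structures.
From mathcomp Require Import all_boot all_order all_algebra.
From mathcomp Require Import reals.
From mathcomp.algebra_tactics Require Import ring lra.
From Stdlib Require List.
Import Order.TTheory GRing.Theory Num.Theory.
Local Open Scope ring_scope.

Lemma Err_sup (R : realType) (al be q : R) : 0 < al -> 0 < be -> 1 <= al + be ->
  0 <= q <= 1 -> exists D, forall x, 0 <= x <= 1 ->
  Err al be x <= Err al be q + D * (x - q).
Proof.
move=> ha hb hs /andP[hq0 hq1].
have sp : 0 < al + be by lra.
have Bp : 0 < (al + be) - q * (al + be - 1) by nra.
exists (- (2 * al * be) / ((al + be) * ((al + be) - q * (al + be - 1)) ^+ 2)).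
move=> x /andP[hx0 hx1].
have Ap : 0 < (al + be) - x * (al + be - 1) by nra.
have E : Err al be x - Err al be q
   - (- (2 * al * be) / ((al + be) * ((al + be) - q * (al + be - 1)) ^+ 2)) * (x - q)
   = - ((2 * al * be) * (al + be - 1) * (x - q) ^+ 2 /
        ((al + be) * ((al + be) - x * (al + be - 1)) * ((al + be) - q * (al + be - 1)) ^+ 2)).
  rewrite /Err; field.
  by apply/and3P; split; apply: lt0r_neq0.
have : 0 <= (2 * al * be) * (al + be - 1) * (x - q) ^+ 2 /
        ((al + be) * ((al + be) - x * (al + be - 1)) * ((al + be) - q * (al + be - 1)) ^+ 2).
  apply: divr_ge0; last by rewrite !mulr_ge0 ?ltW ?exprn_gt0.
  apply: mulr_ge0; last exact: sqr_ge0.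
  apply: mulr_ge0; first by apply: mulr_ge0; [apply: mulr_ge0|]; lra.
  lra.
lra.
Qed.

Definition lin (R : realType) (x0 x1 x2 : R) (a : policy R) :=
  pa0 a * x0 + pa1 a * x1 + pa2 a * x2.
Arguments lin {R}.

Lemma pick3 (R : realType) (e0 e1 e2 m0 m1 m2 P : R) :
  0 <= m0 -> 0 <= m1 -> 0 <= m2 -> m0 + m1 + m2 = 1 ->
  m0 * e0 + m1 * e1 + m2 * e2 <= P -> e0 <= P \/ e1 <= P \/ e2 <= P.
Proof.
move=> h0 h1 h2 hs hS.
have [c|c] := lerP e0 P; first by left.
have [d|d] := lerP e1 P; first by right; left.
right; right.
have [f|f] := lerP e2 P => //.
have : m0 * (e0 - P) + m1 * (e1 - P) + m2 * (e2 - P) <= 0 by nra.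
have g0 : 0 <= m0 * (e0 - P) by apply: mulr_ge0; lra.
have g1 : 0 <= m1 * (e1 - P) by apply: mulr_ge0; lra.
have g2 : 0 <= m2 * (e2 - P) by apply: mulr_ge0; lra.
move=> H.
have z0 : m0 * (e0 - P) = 0 by lra.
have z1 : m1 * (e1 - P) = 0 by lra.
have z2 : m2 * (e2 - P) = 0 by lra.
have y0 : m0 = 0.
  by move/eqP: z0; rewrite mulf_eq0 => /orP[/eqP //|/eqP]; lra.
have y1 : m1 = 0.
  by move/eqP: z1; rewrite mulf_eq0 => /orP[/eqP //|/eqP]; lra.
have y2 : m2 = 0.
  by move/eqP: z2; rewrite mulf_eq0 => /orP[/eqP //|/eqP]; lra.
lra.
Qed.

Lemma gen (R : realType) (al1 be1 al2 be2 w1 w2 G x0 x1 x2 y0 y1 y2 : R) :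
  0 < al1 -> 0 < be1 -> 1 <= al1 + be1 ->
  0 < al2 -> 0 < be2 -> 1 <= al2 + be2 ->
  0 <= w1 -> 0 <= w2 -> 0 < G <= 1 ->
  (forall b, feasible G b -> 0 <= lin x0 x1 x2 b <= 1 /\ 0 <= lin y0 y1 y2 b <= 1) ->
  forall a, feasible G a -> exists v, vertex G v /\
    w1 * Err al1 be1 (lin x0 x1 x2 v) + w2 * Err al2 be2 (lin y0 y1 y2 v)
    <= w1 * Err al1 be1 (lin x0 x1 x2 a) + w2 * Err al2 be2 (lin y0 y1 y2 a).
Proof.
move=> ha1 hb1 hs1 ha2 hb2 hs2 hw1 hw2 /andP[hG0 hG1] Hb a Ha.
set V0 := Pol 1 0 (0 : R).
set V1 := Pol (1 - G) G 0.
set V2 := Pol (1 - G) 0 G.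
have F0 : feasible G V0 by rewrite /feasible /V0 /=; lra.
have F1 : feasible G V1 by rewrite /feasible /V1 /=; lra.
have F2 : feasible G V2 by rewrite /feasible /V2 /=; lra.
case: (Ha) => a0 [a1 [a2 [asum aG]]].
have [/andP[q10 q11] /andP[q20 q21]] := Hb a Ha.
have [D1 HD1] := @Err_sup _ _ _ (lin x0 x1 x2 a) ha1 hb1 hs1 (introT andP (conj q10 q11)).
have [D2 HD2] := @Err_sup _ _ _ (lin y0 y1 y2 a) ha2 hb2 hs2 (introT andP (conj q20 q21)).
set P := w1 * Err al1 be1 (lin x0 x1 x2 a) + w2 * Err al2 be2 (lin y0 y1 y2 a).
set phi := fun v => w1 * Err al1 be1 (lin x0 x1 x2 v) + w2 * Err al2 be2 (lin y0 y1 y2 v).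
have key : forall v, feasible G v -> phi v <= P
   + w1 * (D1 * (lin x0 x1 x2 v - lin x0 x1 x2 a))
   + w2 * (D2 * (lin y0 y1 y2 v - lin y0 y1 y2 a)).
  move=> v Fv; have [hx hy] := Hb v Fv.
  have e1 := HD1 _ hx; have e2 := HD2 _ hy.
  have e1' := ler_wpM2l hw1 e1; have e2' := ler_wpM2l hw2 e2.
  rewrite /phi /P; lra.
have k0 := key _ F0; have k1 := key _ F1; have k2 := key _ F2.
set m1 := pa1 a / G; set m2 := pa2 a / G; set m0 := 1 - m1 - m2.
have Gn : G != 0 by apply: lt0r_neq0.
have m1p : 0 <= m1 by apply: divr_ge0; lra.
have m2p : 0 <= m2 by apply: divr_ge0; lra.
have m0p : 0 <= m0.
  have h : m1 + m2 = (pa1 a + pa2 a) / G by rewrite /m1 /m2 mulrDl.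
  have : (pa1 a + pa2 a) / G <= 1 by rewrite ler_pdivrMr //; lra.
  rewrite /m0; lra.
have Lx : lin x0 x1 x2 a = m0 * lin x0 x1 x2 V0 + m1 * lin x0 x1 x2 V1 + m2 * lin x0 x1 x2 V2.
  rewrite /lin /m0 /m1 /m2 /V0 /V1 /V2 /=.
  have -> : pa0 a = 1 - pa1 a - pa2 a by lra.
  by field.
have Ly : lin y0 y1 y2 a = m0 * lin y0 y1 y2 V0 + m1 * lin y0 y1 y2 V1 + m2 * lin y0 y1 y2 V2.
  rewrite /lin /m0 /m1 /m2 /V0 /V1 /V2 /=.
  have -> : pa0 a = 1 - pa1 a - pa2 a by lra.
  by field.
have S : m0 * phi V0 + m1 * phi V1 + m2 * phi V2 <= P.
  have s0 := ler_wpM2l m0p k0; have s1 := ler_wpM2l m1p k1; have s2 := ler_wpM2l m2p k2.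
  have E : m0 * (P + w1 * (D1 * (lin x0 x1 x2 V0 - lin x0 x1 x2 a)) + w2 * (D2 * (lin y0 y1 y2 V0 - lin y0 y1 y2 a)))
    + m1 * (P + w1 * (D1 * (lin x0 x1 x2 V1 - lin x0 x1 x2 a)) + w2 * (D2 * (lin y0 y1 y2 V1 - lin y0 y1 y2 a)))
    + m2 * (P + w1 * (D1 * (lin x0 x1 x2 V2 - lin x0 x1 x2 a)) + w2 * (D2 * (lin y0 y1 y2 V2 - lin y0 y1 y2 a)))
    = P + w1 * D1 * (m0 * lin x0 x1 x2 V0 + m1 * lin x0 x1 x2 V1 + m2 * lin x0 x1 x2 V2 - lin x0 x1 x2 a)
        + w2 * D2 * (m0 * lin y0 y1 y2 V0 + m1 * lin y0 y1 y2 V1 + m2 * lin y0 y1 y2 V2 - lin y0 y1 y2 a).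
    rewrite /m0; ring.
  rewrite -Lx -Ly !subrr !mulr0 !addr0 in E.
  lra.
have msum : m0 + m1 + m2 = 1 by rewrite /m0; ring.
have [H|[H|H]] := @pick3 _ _ _ _ _ _ _ _ m0p m1p m2p msum S.
- by exists V0; split; [left|].
- by exists V1; split; [right; left|].
- by exists V2; split; [right; right|].
Qed.

Lemma list_min (R : realType) (T : Type) (f : T -> R) (s : list T) :
  s <> nil -> exists x, List.In x s /\ forall y, List.In y s -> f x <= f y.
Proof.
elim: s => [//|x0 s IH] _.
case: s IH => [|x1 s] IH.
  exists x0; split; first by left.
  by move=> y [<-|[]].
have [x [Hx Hm]] := IH (fun H => ltac:(discriminate H)).
have [c|c] := lerP (f x0) (f x).
- exists x0; split; first by left.
  move=> y [<-|Hy] //; apply: le_trans c (Hm _ Hy).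
- exists x; split; first by right.
  move=> y [<-|Hy]; [exact: ltW | exact: Hm].
Qed.

Lemma tp (R : realType) (t p : R) : 0 <= t -> 0 <= p <= 1 -> 0 <= t * p <= t.
Proof. move=> ht /andP[h0 h1]; apply/andP; split; nra. Qed.
Arguments tp {R t p}.

Lemma qbound (R : realType) (G1 G2 p11 p22 p112 p221 : R) i a1 a2 :
  0 <= p11 <= 1 -> 0 <= p22 <= 1 -> 0 <= p112 <= 1 -> 0 <= p221 <= 1 ->
  (i = 1 \/ i = 2)%N ->
  feasible G1 a1 -> feasible G2 a2 -> 0 <= qeff p11 p22 p112 p221 i a1 a2 <= 1.
Proof.
move=> h11 h22 /andP[h1a h1b] /andP[h2a h2b] hi [b0 [b1 [b2 [bs _]]]] [c0 [c1 [c2 [cs _]]]].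
have hr : 0 <= 1 - (1 - p112) * (1 - p221) <= 1 by apply/andP; split; nra.
have h112 : 0 <= p112 <= 1 by apply/andP.
have h221 : 0 <= p221 <= 1 by apply/andP.
have prod : (pa0 a1 + pa1 a1 + pa2 a1) * (pa0 a2 + pa1 a2 + pa2 a2) = 1 by rewrite bs cs mulr1.
case: hi => ->; rewrite /qeff /acomp /=.
- have /andP[t1 t1'] := tp (mulr_ge0 b1 c0) h11.
  have /andP[t2 t2'] := tp (mulr_ge0 b0 c1) h22.
  have /andP[t3 t3'] := tp (mulr_ge0 b1 c1) hr.
  have /andP[t4 t4'] := tp (mulr_ge0 b1 c2) h112.
  have /andP[t5 t5'] := tp (mulr_ge0 b2 c1) h221.
  have u1 := mulr_ge0 b0 c0; have u2 := mulr_ge0 b2 c2.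
  apply/andP; split; nra.
- have /andP[t1 t1'] := tp (mulr_ge0 b2 c0) h11.
  have /andP[t2 t2'] := tp (mulr_ge0 b0 c2) h22.
  have /andP[t3 t3'] := tp (mulr_ge0 b2 c2) hr.
  have /andP[t4 t4'] := tp (mulr_ge0 b2 c1) h112.
  have /andP[t5 t5'] := tp (mulr_ge0 b1 c2) h221.
  have u1 := mulr_ge0 b0 c0; have u2 := mulr_ge0 b1 c1.
  apply/andP; split; nra.
Qed.

Arguments gen {R al1 be1 al2 be2 w1 w2 G} x0 x1 x2 y0 y1 y2.
Arguments qbound {R G1 G2 p11 p22 p112 p221 i a1 a2}.

Theorem theorem1 (R : realType)
  (al1 be1 al2 be2 w1 w2 G1 G2 p11 p22 p112 p221 : R) :
  0 < al1 < 1 -> 0 < be1 < 1 -> 0 < al2 < 1 -> 0 < be2 < 1 ->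
  1 - al1 - be1 <= 0 -> 1 - al2 - be2 <= 0 ->
  0 <= w1 -> 0 <= w2 ->
  0 < G1 <= 1 -> 0 < G2 <= 1 ->
  0 <= p11 <= 1 -> 0 <= p22 <= 1 -> 0 <= p112 <= 1 -> 0 <= p221 <= 1 ->
  exists v1 v2 : policy R,
    vertex G1 v1 /\ vertex G2 v2 /\
    forall a1 a2 : policy R, feasible G1 a1 -> feasible G2 a2 ->
      Eobj al1 be1 al2 be2 w1 w2 p11 p22 p112 p221 v1 v2
      <= Eobj al1 be1 al2 be2 w1 w2 p11 p22 p112 p221 a1 a2.
Proof.
move=> /andP[ha1 _] /andP[hb1 _] /andP[ha2 _] /andP[hb2 _] hs1 hs2 hw1 hw2 hG1 hG2 h11 h22 h112 h221.
have hs1' : 1 <= al1 + be1 by lra.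
have hs2' : 1 <= al2 + be2 by lra.
set r := 1 - (1 - p112) * (1 - p221).
set E := Eobj al1 be1 al2 be2 w1 w2 p11 p22 p112 p221.
have vfeas : forall (G : R) (v : policy R), 0 < G <= 1 -> vertex G v -> feasible G v.
  move=> G v /andP[g0 g1] [->|[->|->]]; rewrite /feasible /=; lra.
have step : forall a1 a2, feasible G1 a1 -> feasible G2 a2 ->
   exists v1 v2, vertex G1 v1 /\ vertex G2 v2 /\ E v1 v2 <= E a1 a2.
  move=> a1 a2 F1 F2.
  have B1 : forall b, feasible G1 b -> 0 <= lin (pa1 a2 * p22) (pa0 a2 * p11 + pa1 a2 * r + pa2 a2 * p112) (pa1 a2 * p221) b <= 1
     /\ 0 <= lin (pa2 a2 * p22) (pa2 a2 * p221) (pa0 a2 * p11 + pa2 a2 * r + pa1 a2 * p112) b <= 1.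
  { move=> b Fb.
    have e1 : lin (pa1 a2 * p22) (pa0 a2 * p11 + pa1 a2 * r + pa2 a2 * p112) (pa1 a2 * p221) b
       = qeff p11 p22 p112 p221 1 b a2 by rewrite /lin /qeff /acomp /r /=; ring.
    have e2 : lin (pa2 a2 * p22) (pa2 a2 * p221) (pa0 a2 * p11 + pa2 a2 * r + pa1 a2 * p112) b
       = qeff p11 p22 p112 p221 2 b a2 by rewrite /lin /qeff /acomp /r /=; ring.
    rewrite e1 e2; split; apply: (qbound h11 h22 h112 h221 _ Fb F2); by [left|right]. }
  have [v1 [V1 Hv1]] := gen (pa1 a2 * p22) (pa0 a2 * p11 + pa1 a2 * r + pa2 a2 * p112) (pa1 a2 * p221)
      (pa2 a2 * p22) (pa2 a2 * p221) (pa0 a2 * p11 + pa2 a2 * r + pa1 a2 * p112)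
      ha1 hb1 hs1' ha2 hb2 hs2' hw1 hw2 hG1 B1 a1 F1.
  have F1v := vfeas _ _ hG1 V1.
  have B2 : forall b, feasible G2 b -> 0 <= lin (pa1 v1 * p11) (pa0 v1 * p22 + pa1 v1 * r + pa2 v1 * p221) (pa1 v1 * p112) b <= 1
     /\ 0 <= lin (pa2 v1 * p11) (pa2 v1 * p112) (pa0 v1 * p22 + pa2 v1 * r + pa1 v1 * p221) b <= 1.
  { move=> b Fb.
    have e1 : lin (pa1 v1 * p11) (pa0 v1 * p22 + pa1 v1 * r + pa2 v1 * p221) (pa1 v1 * p112) b
       = qeff p11 p22 p112 p221 1 v1 b by rewrite /lin /qeff /acomp /r /=; ring.
    have e2 : lin (pa2 v1 * p11) (pa2 v1 * p112) (pa0 v1 * p22 + pa2 v1 * r + pa1 v1 * p221) b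
       = qeff p11 p22 p112 p221 2 v1 b by rewrite /lin /qeff /acomp /r /=; ring.
    rewrite e1 e2; split; apply: (qbound h11 h22 h112 h221 _ F1v Fb); by [left|right]. }
  have [v2 [V2 Hv2]] := gen (pa1 v1 * p11) (pa0 v1 * p22 + pa1 v1 * r + pa2 v1 * p221) (pa1 v1 * p112)
      (pa2 v1 * p11) (pa2 v1 * p112) (pa0 v1 * p22 + pa2 v1 * r + pa1 v1 * p221)
      ha1 hb1 hs1' ha2 hb2 hs2' hw1 hw2 hG2 B2 a2 F2.
  exists v1, v2; split => //; split => //.
  have X1 : E v1 a2 <= E a1 a2.
    have e : forall b, E b a2 = w1 * Err al1 be1 (lin (pa1 a2 * p22) (pa0 a2 * p11 + pa1 a2 * r + pa2 a2 * p112) (pa1 a2 * p221) b)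
      + w2 * Err al2 be2 (lin (pa2 a2 * p22) (pa2 a2 * p221) (pa0 a2 * p11 + pa2 a2 * r + pa1 a2 * p112) b).
      move=> b; rewrite /E /Eobj; congr (_ * Err _ _ _ + _ * Err _ _ _);
        rewrite /lin /qeff /acomp /r /=; ring.
    by rewrite !e.
  have X2 : E v1 v2 <= E v1 a2.
    have e : forall b, E v1 b = w1 * Err al1 be1 (lin (pa1 v1 * p11) (pa0 v1 * p22 + pa1 v1 * r + pa2 v1 * p221) (pa1 v1 * p112) b)
      + w2 * Err al2 be2 (lin (pa2 v1 * p11) (pa2 v1 * p112) (pa0 v1 * p22 + pa2 v1 * r + pa1 v1 * p221) b).
      move=> b; rewrite /E /Eobj; congr (_ * Err _ _ _ + _ * Err _ _ _);
        rewrite /lin /qeff /acomp /r /=; ring.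
    by rewrite !e.
  exact: le_trans X2 X1.
pose l1 := [:: Pol 1 0 (0:R); Pol (1 - G1) G1 0; Pol (1 - G1) 0 G1].
pose l2 := [:: Pol 1 0 (0:R); Pol (1 - G2) G2 0; Pol (1 - G2) 0 G2].
have inv1 : forall v, List.In v l1 <-> vertex G1 v.
  move=> v; rewrite /l1 /vertex /=; split.
  - by move=> [<-|[<-|[<-|[]]]]; [left|right;left|right;right].
  - by move=> [->|[->|->]]; [left|right;left|right;right;left].
have inv2 : forall v, List.In v l2 <-> vertex G2 v.
  move=> v; rewrite /l2 /vertex /=; split.
  - by move=> [<-|[<-|[<-|[]]]]; [left|right;left|right;right].
  - by move=> [->|[->|->]]; [left|right;left|right;right;left].
have [[v1 v2] [Hin Hmin]] := @list_min R _ (fun p : policy R * policy R => E p.1 p.2)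
   (List.list_prod l1 l2) ltac:(by []).
move/List.in_prod_iff: Hin => [/inv1 V1 /inv2 V2].
exists v1, v2; split => //; split => // a1 a2 F1 F2.
have [u1 [u2 [U1 [U2 Hu]]]] := step a1 a2 F1 F2.
apply: le_trans Hu.
apply: (Hmin (u1, u2)).
by apply/List.in_prod_iff; split; [apply/inv1|apply/inv2].
Qed.
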